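(* Let $G$ be a group and let $\{\mathrm{id}\}=H_0\subset H_1\subset\cdots\subset H_k$ be a nested sequence of subgroups of $G$. Let $A$ be a finite symmetric subset of $G$ and set $A_i:=A^2\cap H_i$ for $i=0,\dots,k$. Assume that $\langle A_{i+1}\rangle \not\subseteq A_{i+1}H_i$ for every $i=0,\dots,k-1$. Then $|A^5|\geq k|A|$.
   Context: A subset $A$ is symmetric if $\mathrm{id}\in A$ and $a^{-1}\in A$ whenever $a\in A$. $A^n$ denotes the $n$-fold product set, $\langle B\rangle$ the subgroup generated by $B$, and $A_{i+1}H_i=\{ah : a\in A_{i+1}, h\in H_i\}$. *)

(* Defs.v *)
From HB Require Import structures.
From mathcomp Require Import all_boot monoid finmap.

Set Implicit Arguments.
Unset Strict Implicit.
Unset Printing Implicit Defensive.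

Local Open Scope group_scope.
Local Open Scope fset_scope.

Section Defs.
Variable G : groupType.

(* Subsets of G that may be infinite (e.g. subgroups) are predicates. *)
Definition is_subgroup (H : G -> Prop) : Prop :=
  [/\ H 1, (forall x y, H x -> H y -> H (x * y)) & (forall x, H x -> H x^-1)].

Definition symmetric_set (A : {fset G}) : Prop :=
  (1 \in A) /\ (forall a, a \in A -> a^-1 \in A).

Definition fset_mul (A B : {fset G}) : {fset G} :=
  [fset a * b | a in A, b in B].

Fixpoint fset_pow (A : {fset G}) (n : nat) : {fset G} :=
  match n with
  | 0 => [fset 1]
  | 1 => A
  | m.+1 => fset_mul (fset_pow A m) A
  end.

Definition generated (B : G -> Prop) (x : G) : Prop :=
  forall S : G -> Prop, is_subgroup S -> (forall y, B y -> S y) -> S x.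

Definition set_mul (B H : G -> Prop) (x : G) : Prop :=
  exists b h, [/\ B b, H h & x = b * h].

End Defs.

(* Main.v *)
Require Import Defs.
From HB Require Import structures.
From mathcomp Require Import all_boot monoid finmap.
From Stdlib Require Import Classical.
Local Open Scope group_scope.
Local Open Scope fset_scope.

Section S.
Variable G : groupType.
Implicit Types A : {fset G}.

Lemma A2P A x : reflect (exists a b, [/\ a \in A, b \in A & x = a * b]) (x \in fset_pow A 2).
Proof.
apply: (iffP (imfset2P _ _ _ _ _)).
  by move=> [a aA [b bA ->]]; exists a, b.
by move=> [a [b [aA bA ->]]]; exists a => //; exists b.
Qed.

Lemma A2_mem A a b : a \in A -> b \in A -> a * b \in fset_pow A 2.
Proof. by move=> ? ?; apply/A2P; exists a, b. Qed.

Lemma A2_inv A x : symmetric_set A -> x \in fset_pow A 2 -> x^-1 \in fset_pow A 2.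
Proof.
move=> [_ sA] /A2P [a [b [aA bA ->]]]; rewrite invgM; exact: A2_mem (sA _ bA) (sA _ aA).
Qed.

Lemma A2_1 A : symmetric_set A -> 1 \in fset_pow A 2.
Proof. by move=> [h1 _]; rewrite -(mulg1 1); apply: A2_mem. Qed.

Lemma A5_mem A c x y : c \in A -> x \in fset_pow A 2 -> y \in fset_pow A 2 ->
  c * (x * y) \in fset_pow A 5.
Proof.
move=> cA /A2P [a1 [a2 [h1 h2 ->]]] /A2P [b1 [b2 [h3 h4 ->]]].
rewrite !mulgA.
apply: in_imfset2 => //=; apply: in_imfset2 => //=; apply: in_imfset2 => //=.
exact: in_imfset2.
Qed.

Lemma key_step A (K L : G -> Prop) :
  symmetric_set A -> is_subgroup K -> is_subgroup L -> (forall x, K x -> L x) ->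
  let Ai := fun x => x \in fset_pow A 2 /\ L x in
  ~ (forall x, generated Ai x -> set_mul Ai K x) ->
  exists g, [/\ g = g, L g, (exists a b, [/\ a \in fset_pow A 2, b \in fset_pow A 2 & g = a * b])
     & ~ set_mul (fun x => x \in fset_pow A 2) K g].
Proof.
move=> sA [K1 KM KV] [L1 LM LV] KL Ai Hn.
apply: NNPP => Hc; apply: Hn.
have Hab : forall a b, Ai a -> Ai b -> set_mul Ai K (a * b).
  move=> a b [a2 aL] [b2 bL]; apply: NNPP => Hm; apply: Hc.
  exists (a * b); split => //; first exact: LM.
    by exists a, b.
  move=> [c [h [c2 hK E]]]; apply: Hm; exists c, h; split => //; split => //.
  have -> : c = a * b * h^-1 by rewrite E mulgK.
  exact: LM (LM _ _ aL bL) (LV _ (KL _ hK)).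
set X := set_mul Ai K.
have HX : forall a y, Ai a -> X y -> X (a * y).
  move=> a y aA [b [h [bA hK ->]]].
  have [c [h' [cA h'K E]]] := Hab _ _ aA bA.
  exists c, (h' * h); split => //; first exact: KM.
  by rewrite mulgA E mulgA.
have AiV : forall a, Ai a -> Ai a^-1.
  by move=> a [a2 aL]; split; [exact: A2_inv | exact: LV].
have X1 : X 1 by exists 1, 1; split => //; [split; [exact: A2_1|] | rewrite mulg1].
pose S x := forall y, X y <-> X (x * y).
have SS : is_subgroup S.
  split.
  - by move=> y; rewrite mul1g.
  - move=> x z Sx Sz y; rewrite -mulgA; split.
      by move=> /(Sz y) /(Sx (z * y)).
    by move=> /(Sx (z * y)) /(Sz y).
  - move=> x Sx y; split.
      by move=> Xy; apply/(Sx (x^-1 * y)); rewrite mulVKg.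
    by move=> /(Sx (x^-1 * y)); rewrite mulVKg.
move=> x /(_ S SS) Sx.
have /Sx : forall y, Ai y -> S y.
  move=> a aA y; split; first exact: HX.
  by move=> /(HX _ _ (AiV _ aA)); rewrite mulKg.
by move=> /(_ 1) [/(_ X1)]; rewrite mulg1.
Qed.

End S.

Theorem lemma3p1 (G : groupType) (k : nat) (H : nat -> G -> Prop)
    (A : {fset G}) :
  (forall i, i <= k -> is_subgroup (H i)) ->
  (forall x, H 0 x <-> x = 1) ->
  (forall i, i < k -> forall x, H i x -> H i.+1 x) ->
  symmetric_set A ->
  (let Ai i := fun x => x \in fset_pow A 2 /\ H i x in
   forall i, i < k ->
     ~ (forall x, generated (Ai i.+1) x -> set_mul (Ai i.+1) (H i) x)) ->
  (k * #|` A| <= #|` fset_pow A 5|)%N.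
Proof.
move=> Hsg H0 Hinc sA Hgen.
have main : forall n, (n <= k)%N -> exists T : {fset G},
   [/\ T `<=` fset_pow A 5, (n * #|` A| <= #|` T|)%N &
       forall t, t \in T -> exists c h, [/\ c \in A, H n h & t = c * h]].
  elim=> [|n IH] hn.
    exists fset0; split; [exact: fsub0set | by [] | by move=> t; rewrite in_fset0].
  have nk : (n < k)%N by [].
  have [T [TA5 Tc Tp]] := IH (ltnW nk).
  have [g [_ gL [a [b [a2 b2 gE]]] gn]] :=
    @key_step G A _ _ sA (Hsg n (ltnW nk)) (Hsg n.+1 nk) (Hinc n nk) (Hgen n nk).
  pose B := [fset c * g | c in A].
  have hB : #|` B| = #|` A| by rewrite card_imfset //=; exact: mulIg.
  have hI : T `&` B = fset0.
    apply/eqP; rewrite -fsubset0; apply/fsubsetP => x; rewrite in_fsetI => /andP [xT xB].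
    exfalso; have [c [h [cA hK E]]] := Tp _ xT.
    move: xB => /imfsetP [c' /= c'A E'].
    apply: gn; exists (c'^-1 * c), h; split => //; last by rewrite -mulgA -E E' mulKg.
    by apply: A2_mem => //; case: sA => _; apply.
  exists (T `|` B); split.
  - rewrite fsubUset TA5 /=; apply/fsubsetP => x /imfsetP [c /= cA ->].
    by rewrite gE; apply: A5_mem.
  - have := cardfsUI T B; rewrite hI cardfs0 addn0 hB => ->.
    by rewrite mulSn addnC leq_add2r.
  - move=> t; rewrite in_fsetU => /orP [/Tp [c [h [cA hK ->]]]|/imfsetP [c /= cA ->]].
      by exists c, h; split => //; apply: Hinc.
    by exists c, g.
have [T [TA5 Tc _]] := main k (leqnn k).
exact: leq_trans Tc (fsubset_leq_card TA5).
Qed.
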